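(* Let $\mathcal{P}$ be a profile of unrooted phylogenetic trees whose display graph $G(\mathcal{P})$ is connected. If $F$ is a minimal separator of $\mathrm{LG}(\mathcal{P})$, then $\mathrm{LG}(\mathcal{P})-F'$ is connected for every proper subset $F'\subset F$.
   Context: A phylogenetic tree is an unrooted tree whose leaves are bijectively labeled (leaves identified with labels; internal vertices have degree at least three). A profile $\mathcal{P}=\{T_1,\dots,T_k\}$ is a finite collection of phylogenetic trees; internal vertices of distinct trees are disjoint, while leaves with the same label are the same vertex. The display graph $G(\mathcal{P})$ has vertex set $\bigcup_i V(T_i)$ and edge set $\bigcup_i E(T_i)$. $\mathrm{LG}(\mathcal{P})$ is the line graph of $G(\mathcal{P})$ (vertices are edges of $G(\mathcal{P})$, adjacent iff they share an endpoint). In a graph $G$, for nonadjacent vertices $a,b$, an $a$-$b$ separator is $U\subset V(G)$ with $a,b$ in different components of $G-U$; it is minimal if no proper subset is an $a$-$b$ separator; a minimal separator is a minimal $a$-$b$ separator for some nonadjacent $a,b$. *)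

(* Defs.v *)
From mathcomp Require Import all_boot.
Set Implicit Arguments. Unset Strict Implicit. Unset Printing Implicit Defensive.

Section Graphs.
Variable U : finType.

Definition induced (W : {set U}) (adj : rel U) : rel U :=
  fun x y => [&& x \in W, y \in W & adj x y].

Definition connected_on (W : {set U}) (adj : rel U) : Prop :=
  forall x y, x \in W -> y \in W -> connect (induced W adj) x y.

Definition separates (W : {set U}) (adj : rel U) (S : {set U}) (a b : U) : Prop :=
  [/\ S \subset W, a \in W :\: S, b \in W :\: S &
      ~~ connect (induced (W :\: S) adj) a b].

Definition min_separates (W : {set U}) (adj : rel U) (S : {set U}) (a b : U) : Prop :=
  separates W adj S a b /\
  forall S' : {set U}, S' \proper S -> ~ separates W adj S' a b.

Definition minimal_separator (W : {set U}) (adj : rel U) (S : {set U}) : Prop :=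
  exists a b, [/\ a \in W, b \in W, ~~ adj a b & min_separates W adj S a b].

End Graphs.

Section Trees.
Variable T : finType.

(* simple graphs given by an edge set of 2-element vertex sets *)
Definition eadj (Et : {set {set T}}) : rel T :=
  fun x y => (x != y) && ([set x; y] \in Et).

Definition tdeg (Et : {set {set T}}) (v : T) : nat := #|[set e in Et | v \in e]|.

Definition is_tree (Vt : {set T}) (Et : {set {set T}}) : Prop :=
  [/\ forall e, e \in Et -> (#|e| == 2) && (e \subset Vt),
      Vt != set0,
      connected_on Vt (eadj Et) &
      forall s : seq T, uniq s -> 3 <= size s -> ~~ cycle (eadj Et) s].

(* leaves: vertices of degree at most 1 (degree 0 only for a one-vertex tree) *)
Definition leaves (Vt : {set T}) (Et : {set {set T}}) : {set T} :=
  [set v in Vt | tdeg Et v <= 1].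

(* phylogenetic tree: internal vertices have degree >= 3; the leaves are the labels *)
Definition is_phylo_tree (Vt : {set T}) (Et : {set {set T}}) : Prop :=
  is_tree Vt Et /\ forall v, v \in Vt -> tdeg Et v != 2.

(* a profile of k phylogenetic trees: distinct trees share only leaves (labels) *)
Definition is_profile (k : nat) (V : 'I_k -> {set T}) (E : 'I_k -> {set {set T}}) : Prop :=
  (forall i, is_phylo_tree (V i) (E i)) /\
  (forall i j, i != j -> V i :&: V j \subset leaves (V i) (E i) :&: leaves (V j) (E j)).

Definition display_vertices k (V : 'I_k -> {set T}) : {set T} := \bigcup_(i < k) V i.
Definition display_edges k (E : 'I_k -> {set {set T}}) : {set {set T}} := \bigcup_(i < k) E i.

(* line graph: vertices = edges of the display graph, adjacent iff distinct and sharing an endpoint *)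
Definition line_adj : rel {set T} := fun e f => (e != f) && (e :&: f != set0).

End Trees.

(* Main.v *)
Require Import Defs.
From mathcomp Require Import all_boot.
Set Implicit Arguments. Unset Strict Implicit. Unset Printing Implicit Defensive.

Lemma closure_pred (U : finType) (e : rel U) (P : pred U) x y :
  P x -> (forall u v, P u -> e u v -> P v) -> connect e x y -> P y.
Proof.
move=> Px Hc /connectP [p pth ->]; elim: p x Px pth => [|z p IH] x Px //=.
by case/andP => exz pth; exact: IH (Hc _ _ Px exz) pth.
Qed.

Section LG.
Variable T : finType.
Local Notation adjL := (@line_adj T).

Lemma induced_sym (S : {set {set T}}) : symmetric (induced S adjL).
Proof. by move=> x y; rewrite /induced /line_adj eq_sym setIC andbCA. Qed.

Lemma symS (S : {set {set T}}) : connect_sym (induced S adjL).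
Proof. exact: sym_connect_sym (induced_sym S). Qed.

Lemma connect_mono (S1 S2 : {set {set T}}) x y : S1 \subset S2 ->
  connect (induced S1 adjL) x y -> connect (induced S2 adjL) x y.
Proof.
move=> sS; apply: connect_sub => u v /and3P [uS vS uv]; apply: connect1.
by rewrite /induced (subsetP sS _ uS) (subsetP sS _ vS).
Qed.

Lemma connect_in (S : {set {set T}}) x y : x \in S ->
  connect (induced S adjL) x y -> y \in S.
Proof.
move=> xS; apply: (closure_pred (P := fun z => z \in S)) xS _.
by move=> u v _ /and3P [].
Qed.

Lemma step_eq (S : {set {set T}}) x q r : q \in S -> r \in S -> q :&: r != set0 ->
  connect (induced S adjL) x q -> connect (induced S adjL) x r.
Proof.
move=> qS rS qr H; case: (eqVneq q r) => [<- //|nqr].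
by apply: connect_trans H (connect1 _); rewrite /induced qS rS /line_adj nqr.
Qed.

Lemma pigeon (u c d q : {set T}) : #|u| == 2 -> c :&: u != set0 ->
  d :&: u != set0 -> q :&: u != set0 ->
  [|| c :&: d != set0, c :&: q != set0 | d :&: q != set0].
Proof.
case/cards2P => [x0 [y0 [_ ->]]] /set0Pn [p1] /setIP [p1c p1u]
  /set0Pn [p2] /setIP [p2d p2u] /set0Pn [p3] /setIP [p3q p3u].
have: [|| p1 == p2, p1 == p3 | p2 == p3].
  move: p1u p2u p3u; rewrite !inE.
  by move=> /orP[]/eqP-> /orP[]/eqP-> /orP[]/eqP->; rewrite eqxx ?orbT.
case/or3P => /eqP E; subst.
- by apply/orP; left; apply/set0Pn; eexists; rewrite inE; apply/andP; split; eassumption.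
- by apply/orP; right; apply/orP; left; apply/set0Pn; eexists; rewrite inE; apply/andP; split; eassumption.
- by apply/orP; right; apply/orP; right; apply/set0Pn; eexists; rewrite inE; apply/andP; split; eassumption.
Qed.

Lemma touch (W F : {set {set T}}) a b u : a \in W :\: F -> u \in F ->
  connect (induced (W :\: (F :\ u)) adjL) a b ->
  ~~ connect (induced (W :\: F) adjL) a b ->
  exists c, connect (induced (W :\: F) adjL) a c /\ adjL c u.
Proof.
move=> aWF uF Cab nab.
case: (boolP [exists c, connect (induced (W :\: F) adjL) a c && adjL c u]).
  by case/existsP => c /andP [h1 h2]; exists c.
move=> ne; exfalso; move/negP: nab; apply.
apply: (closure_pred (P := fun q => connect (induced (W :\: F) adjL) a q)) Cab => //.
move=> p q Cp /and3P [pX qX pq].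
case: (eqVneq q u) => [E|nqu].
  by move/existsPn: ne => /(_ p); rewrite Cp -E pq.
have pWF : p \in W :\: F := connect_in aWF Cp.
apply: connect_trans Cp (connect1 _).
by rewrite /induced pq andbT pWF; move: qX; rewrite !inE nqu.
Qed.

End LG.

Theorem corollary1 (T : finType) (k : nat)
    (V : 'I_k -> {set T}) (E : 'I_k -> {set {set T}}) :
  is_profile V E ->
  connected_on (display_vertices V) (eadj (display_edges E)) ->
  forall F : {set {set T}},
    minimal_separator (display_edges E) (@line_adj T) F ->
    forall F' : {set {set T}}, F' \proper F ->
      connected_on (display_edges E :\: F') (@line_adj T).
Proof.
move=> [Htrees _] HG F [a [b [aW bW _ [[FW aWF bWF nab] Hmin]]]] F' pF'.
set W := display_edges E in HG FW aWF bWF nab Hmin *.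
have edge2 : forall e, e \in W -> (#|e| == 2) && (e \subset display_vertices V).
  move=> e /bigcupP [i _ eEi]; case: (Htrees i) => [[Hed _ _ _] _].
  case/andP: (Hed e eEi) => -> /subset_trans; apply.
  exact: (bigcup_sup i (P := fun _ => true)).
have LGc : forall e1 e2, e1 \in W -> e2 \in W -> connect (induced W (@line_adj T)) e1 e2.
  move=> e1 e2 e1W e2W.
  case/andP: (edge2 _ e1W) => /eqP c1 s1; case/andP: (edge2 _ e2W) => /eqP c2 s2.
  have: 0 < #|e1| by rewrite c1. case/card_gt0P => x xe1.
  have: 0 < #|e2| by rewrite c2. case/card_gt0P => y ye2.
  have H : [exists e, [&& e \in W, y \in e & connect (induced W (@line_adj T)) e1 e]].
    apply: (closure_pred (P := fun v => [exists e, [&& e \in W, v \in e &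
        connect (induced W (@line_adj T)) e1 e]])) (HG x y (subsetP s1 _ xe1) (subsetP s2 _ ye2)).
      by apply/existsP; exists e1; rewrite e1W xe1 connect0.
    move=> v w /existsP [e /and3P [eW ve Ce]] /and3P [_ _ /andP [nvw vwW]].
    apply/existsP; exists [set v; w]; rewrite vwW set22 /=.
    apply: step_eq eW vwW _ Ce; apply/set0Pn; exists v; by rewrite inE ve set21.
  case/existsP: H => e /and3P [eW ye Ce].
  apply: step_eq eW e2W _ Ce; apply/set0Pn; exists y; by rewrite inE ye ye2.
have Cab : forall u, u \in F -> connect (induced (W :\: (F :\ u)) (@line_adj T)) a b.
  move=> u uF; case: (boolP (connect _ a b)) => // nc; exfalso.
  apply: (Hmin (F :\ u) (properD1 uF)); split => //.
  - exact: subset_trans (subD1set F u) FW.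
  - by move: aWF; rewrite !inE => /andP [/negbTE -> ->]; rewrite andbF.
  - by move: bWF; rewrite !inE => /andP [/negbTE -> ->]; rewrite andbF.
have Cba : forall u, u \in F -> connect (induced (W :\: (F :\ u)) (@line_adj T)) b a.
  by move=> u uF; rewrite symS; exact: Cab.
have nba : ~~ connect (induced (W :\: F) (@line_adj T)) b a by rewrite symS.
set Ca := fun q => connect (induced (W :\: F) (@line_adj T)) a q.
set Cb := fun q => connect (induced (W :\: F) (@line_adj T)) b q.
have Good : forall z, z \in W -> [|| z \in F, Ca z | Cb z].
  move=> z zW; apply: (closure_pred (P := fun q => [|| q \in F, Ca q | Cb q])) (LGc a z aW zW).
    by rewrite /Ca connect0 orbT.
  move=> p q Gp /and3P [pW qW pq].
  case: (boolP (q \in F)) => //= qF.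
  have qWF : q \in W :\: F by rewrite inE qF.
  have pq' : p :&: q != set0 by case/andP: pq.
  case/or3P: Gp => [pF|Cp|Cp].
  - have [c [Cc cp]] := touch aWF pF (Cab p pF) nab.
    have [d [Cd dp]] := touch bWF pF (Cba p pF) nba.
    case: (boolP (Ca q)) => // nCq; case: (boolP (Cb q)) => // nDq; exfalso.
    have cW := connect_in aWF Cc; have dW := connect_in bWF Cd.
    case/andP: cp => _ cp; case/andP: dp => _ dp.
    case/andP: (edge2 p pW) => p2 _.
    have qp : q :&: p != set0 by rewrite setIC.
    case/or3P: (pigeon p2 cp dp qp) => H.
    + move/negP: nab; apply; apply: connect_trans (step_eq cW dW H Cc) _.
      by rewrite symS.
    + by move/negP: nCq; apply; exact: step_eq cW qWF H Cc.
    + by move/negP: nDq; apply; exact: step_eq dW qWF H Cd.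
  - by rewrite /Ca (step_eq (connect_in aWF Cp) qWF pq' Cp).
  - by rewrite /Cb (step_eq (connect_in bWF Cp) qWF pq' Cp) orbT.
have [sF' [f fF fF']] := properP pF'.
have WF_R : W :\: F \subset W :\: F' := setDS W sF'.
have XR : forall u, u \notin F' -> W :\: (F :\ u) \subset W :\: F'.
  move=> u uF'; apply/subsetP => q; rewrite !inE => /andP [h ->]; rewrite andbT.
  apply: contraNN h => qF'; rewrite (subsetP sF' _ qF') andbT.
  by apply/eqP => Eq; rewrite -Eq qF' in uF'.
have toA : forall z, z \in W :\: F' -> connect (induced (W :\: F') (@line_adj T)) a z.
  move=> z zR; have zW : z \in W by move: zR; rewrite inE => /andP [].
  have Cab' := connect_mono (XR f fF') (Cab f fF).
  case/or3P: (Good z zW) => [zF|Cz|Cz].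
  - have zF' : z \notin F' by move: zR; rewrite inE => /andP [].
    have [c [Cc cz]] := touch aWF zF (Cab z zF) nab.
    apply: connect_mono (XR z zF') _.
    have sX : W :\: F \subset W :\: (F :\ z) := setDS W (subD1set F z).
    apply: connect_trans (connect_mono sX Cc) (connect1 _).
    rewrite /induced cz andbT (subsetP sX _ (connect_in aWF Cc)).
    by rewrite !inE eqxx zW.
  - exact: connect_mono WF_R Cz.
  - apply: connect_trans Cab' _; exact: connect_mono WF_R Cz.
move=> x y xR yR; apply: connect_trans _ (toA y yR); rewrite symS; exact: toA.
Qed.
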